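(* Let $k>2$ be even, let $\pi=(1\,2\,\cdots\,k)\in\mathbb{S}_k$, $\mathcal{O}_\pi$ its conjugacy class (the $k$-cycles), so that $\mathbb{S}_k^\pi=\langle\pi\rangle\cong\mathbb{Z}_k$. For a $k$-th root of unity $\omega$ let $\chi_\omega$ be the character of $\langle\pi\rangle$ with $\chi_\omega(\pi)=\omega$. Then $\dim\mathfrak{B}(\mathcal{O}_\pi,\chi_\omega)=\infty$ if $\omega\ne-1$, and the braiding of $M(\mathcal{O}_\pi,\chi_\omega)$ is negative if $\omega=-1$.
   Context: Permutations are composed right to left. For a finite group $G$, a conjugacy class $\mathcal{C}$ of $G$, a fixed $s\in\mathcal{C}$ with centralizer $G^s$ and an irreducible representation $(\rho,V)$ of $G^s$, $M(\mathcal{C},\rho)$ is the irreducible Yetter–Drinfeld module over $\mathbb{C}G$: enumerate $\mathcal{C}=\{t_1=s,\dots,t_M\}$, choose $g_i\in G$ with $g_isg_i^{-1}=t_i$; then $M(\mathcal{C},\rho)=\bigoplus_i g_i\otimes V$ with grading $\deg(g_i\otimes v)=t_i$, action $g\cdot(g_i\otimes v)=g_j\otimes\rho(\gamma)v$ where $gg_i=g_j\gamma$, $\gamma\in G^s$, and braiding $c((g_i\otimes v)\otimes(g_j\otimes w))=(g_h\otimes\rho(\gamma)w)\otimes(g_i\otimes v)$ where $t_ig_j=g_h\gamma$, $\gamma\in G^s$. $\mathfrak{B}(\mathcal{C},\rho)$ is the Nichols algebra of this braided vector space. When $\rho$ is one-dimensional, the braiding is called negative if for all $i,j$ with $t_it_j=t_jt_i$,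 setting $q_{ij}:=\rho(g_j^{-1}t_ig_j)$, one has $q_{ii}=-1$ and $q_{ij}q_{ji}=1$. *)

(* Defs.v *)
From HB Require Import structures.
From mathcomp Require Import all_boot all_order all_algebra all_fingroup all_field.
Unset Printing Implicit Defensive.
Import GRing.Theory Num.Theory.
Local Open Scope ring_scope.

(* A linear map on V^{(x)n} is encoded by its coefficient function        *)
(* A w' w = coefficient of the basis word x_{w'} in A(x_w).               *)
(* The braiding is given by cc h t' t u = coefficient of x_h (x) x_t' in  *)
(* c(x_t (x) x_u).                                                        *)

Section Nichols.
Variable X : finType.
Variable cc : X -> X -> X -> X -> algC.

Definition op (n : nat) := n.-tuple X -> n.-tuple X -> algC.

Definition id_op n : op n := fun w' w => (w' == w)%:R.

Definition comp_op n (A B : op n) : op n :=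
  fun w' w => \sum_(v : n.-tuple X) A w' v * B v w.

(* c_i : the braiding acting on tensor positions i, i+1 (0-indexed) of V^{(x)n} *)
Definition cop n (i : nat) : op n := fun w' w =>
  match @insub nat (fun j => j < n)%N _ i, @insub nat (fun j => j < n)%N _ i.+1 with
  | Some a, Some b =>
      [forall j : 'I_n, (j != a) && (j != b) ==> (tnth w' j == tnth w j)]%:R
      * cc (tnth w' a) (tnth w' b) (tnth w a) (tnth w b)
  | _, _ => 0
  end.

(* product c_{i_1} c_{i_2} ... c_{i_r} (c_{i_r} applied first) *)
Definition prodc n (s : seq nat) : op n := foldr (fun i A => comp_op n (cop n i) A) (id_op n) s.

Definition init_tuple n (w : n.+1.-tuple X) : n.-tuple X :=
  [tuple tnth w (widen_ord (leqnSn n) i) | i < n].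

Definition ext_op n (A : op n) : op n.+1 := fun w' w =>
  A (init_tuple n w') (init_tuple n w) * (tnth w' ord_max == tnth w ord_max)%:R.

(* Quantum symmetrizer Omega_n = sum_{sigma in S_n} M(sigma) (Matsumoto lift),
   computed through the coset decomposition of S_{n+1} by S_n:
   Omega_{n+1} = (Omega_n (x) id) (1 + c_n + c_n c_{n-1} + ... + c_n ... c_1)
   (1-indexed generators; here 0-indexed: c_{n-1}, ..., c_0). *)
Fixpoint Omega (n : nat) : op n :=
  match n return op n with
  | 0 => id_op 0
  | m.+1 => comp_op m.+1 (ext_op m (Omega m))
              (fun w' w => \sum_(j < m.+1) prodc m.+1 [seq (m.-1 - l)%N | l <- iota 0 j] w' w)
  end.

Definition Omega_mx n : 'M[algC]_#|{: n.-tuple X}| :=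
  \matrix_(a, b) Omega n (enum_val a) (enum_val b).

(* B^n(V) = T^n(V) / ker Omega_n, so dim B^n(V) = rank Omega_n and
   dim B(V) = sum_n rank Omega_n;  dim B(V) = infinity : *)
Definition nichols_dim_infinite : Prop :=
  forall N : nat, exists m : nat, (N <= \sum_(n < m) \rank (Omega_mx n))%N.

End Nichols.

(* Part 2. Symmetric group S_k, permutations composed RIGHT TO LEFT.      *)
(* MathComp's product on {perm _} is left-to-right ((s*t) x = t (s x)),   *)
(* so the paper's product a b is  rcomp a b := b * a  ( (a b) x = a (b x) ). *)

Definition rcomp k (a b : {perm 'I_k}) : {perm 'I_k} := (b * a)%g.

(* pi = (1 2 ... k), with the points 1..k labelled 0..k-1 *)
Definition pik k : {perm 'I_k} := perm (@ordS_inj k).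

Definition Opi k : {set {perm 'I_k}} :=
  [set rcomp k (rcomp k g (pik k)) g^-1 | g : {perm 'I_k}].

Definition Xk k := {t : {perm 'I_k} | t \in Opi k}.

(* chi_omega on <pi> : pi^m |-> omega^m (and 0 off <pi>, never used) *)
Definition chi k (omega : algC) (gam : {perm 'I_k}) : algC :=
  if [pick m : 'I_k | gam == (pik k ^+ m)%g] is Some m then omega ^+ m else 0.

(* Braiding of M(O_pi, rho) for one-dimensional rho, with chosen g_t
   (g_t pi g_t^{-1} = t): c(x_t (x) x_u) = rho(gamma) x_h (x) x_t where
   t g_u = g_h gamma, gamma in the centralizer S_k^pi. *)
Definition yd_coef k (rho : {perm 'I_k} -> algC) (g : Xk k -> {perm 'I_k})
  (h t' t u : Xk k) : algC :=
  let gam := rcomp k (rcomp k (g h)^-1 (val t)) (g u) in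
  ((t' == t) && (gam \in 'C[pik k]%g))%:R * rho gam.

Definition negative_braiding k (rho : {perm 'I_k} -> algC) (g : Xk k -> {perm 'I_k}) : Prop :=
  forall t u : Xk k, rcomp k (val t) (val u) = rcomp k (val u) (val t) ->
    let q (a b : Xk k) := rho (rcomp k (rcomp k (g b)^-1 (val a)) (g b)) in
    q t t = -1 /\ q t u * q u t = 1.

(* Main.v *)
Require Import Defs.
From mathcomp Require Import all_boot all_order all_algebra all_fingroup all_field.
From mathcomp Require Import ring zify.
Local Open Scope ring_scope.
Import GRing.Theory Num.Theory.
Set Implicit Arguments. Unset Strict Implicit.

Section DerAlg.
Variable X : eqType.
Variable Q : X -> X -> algC.

Definition Qprod (a : X) (w : seq X) := \prod_(y <- w) Q a y.

Fixpoint Dv (a : X) (F : seq X -> algC) (v : seq X) : algC :=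
  match v with
  | [::] => F [:: a]
  | x :: v' => Qprod a (x :: v') * F (a :: x :: v') + Dv a (fun w => F (x :: w)) v'
  end.

Lemma Dv_ext a F G v : (forall w, F w = G w) -> Dv a F v = Dv a G v.
Proof.
elim: v F G => [|x v IH] F G H /=; first by rewrite H.
by rewrite H (IH _ (fun w => G (x :: w))).
Qed.

Lemma DvZ a c F v : Dv a (fun w => c * F w) v = c * Dv a F v.
Proof.
elim: v F => [|x v IH] F /=; first by [].
by rewrite (IH (fun w => F (x :: w))) mulrDr mulrCA.
Qed.

Lemma DvD a F G v : Dv a (fun w => F w + G w) v = Dv a F v + Dv a G v.
Proof.
elim: v F G => [|x v IH] F G /=; first by [].
rewrite (IH (fun w => F (x :: w)) (fun w => G (x :: w))) mulrDr.
by rewrite -!addrA; congr (_ + _); rewrite addrCA.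
Qed.

Lemma Dv0 a v : Dv a (fun _ => 0) v = 0.
Proof.
by elim: v => [|x v IH] //=; rewrite IH mulr0 addr0.
Qed.

Lemma Dv_closed a F v : Dv a F v =
  \sum_(p < (size v).+1) Qprod a (drop p v) * F (take p v ++ a :: drop p v).
Proof.
elim: v F => [|x v IH] F /=.
  by rewrite big_ord1 /Qprod big_nil mul1r.
rewrite big_ord_recl /=; congr (_ + _).
by rewrite IH; apply: eq_bigr => i _.
Qed.

Definition Pf (b : X) (H : seq X -> algC) (w : seq X) : algC :=
  match w with [::] => 0 | x :: w' => (x == b)%:R * H w' end.
Definition Tw (a : X) (H : seq X -> algC) (w : seq X) : algC := Qprod a w * H w.

Lemma Dv_Pf a b H v : Dv a (Pf b H) v = (a == b)%:R * Tw a H v + Pf b (Dv a H) v.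
Proof.
case: v => [|x v] /=.
  by rewrite /Tw /Qprod big_nil mul1r addr0.
idtac.
by rewrite (DvZ a ((x == b)%:R) H v) /Tw mulrCA.
Qed.

Lemma Tw_Pf a b H v : Tw a (Pf b H) v = Q a b * Pf b (Tw a H) v.
Proof.
case: v => [|x v]; first by rewrite /Tw /= !mulr0.
rewrite /Tw /Qprod /= big_cons.
case: eqP => [->|_]; last by rewrite !mul0r !mulr0.
by rewrite !mul1r mulrA.
Qed.


Lemma Pf_ext b F G v : (forall w, F w = G w) -> Pf b F v = Pf b G v.
Proof. by case: v => [|x v] H //=; rewrite H. Qed.
Lemma PfZ b c F v : Pf b (fun w => c * F w) v = c * Pf b F v.
Proof. by case: v => [|x v] /=; [rewrite mulr0|rewrite mulrCA]. Qed.
Lemma PfB b F G v : Pf b (fun w => F w - G w) v = Pf b F v - Pf b G v.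
Proof. by case: v => [|x v] /=; [rewrite subr0|rewrite mulrBr]. Qed.
Lemma PfD b F G v : Pf b (fun w => F w + G w) v = Pf b F v + Pf b G v.
Proof. by case: v => [|x v] /=; [rewrite addr0|rewrite mulrDr]. Qed.
Lemma Tw_ext a F G v : (forall w, F w = G w) -> Tw a F v = Tw a G v.
Proof. by move=> H; rewrite /Tw H. Qed.
Lemma DvB a F G v : Dv a (fun w => F w - G w) v = Dv a F v - Dv a G v.
Proof.
rewrite (@Dv_ext a _ (fun w => F w + (-1) * G w)); last by move=> w; rewrite mulN1r.
by rewrite DvD (DvZ a (-1) G) mulN1r.
Qed.

Fixpoint Phir (r : seq X) (F : seq X -> algC) : algC :=
  match r with [::] => F [::] | a :: r' => Phir r' (Dv a F) end.

Lemma Phir_ext r F G : (forall w, F w = G w) -> Phir r F = Phir r G.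
Proof.
elim: r F G => [|a r IH] F G H /=; first by rewrite H.
by apply: IH => w; apply: Dv_ext.
Qed.

Lemma PhirZ r c F : Phir r (fun w => c * F w) = c * Phir r F.
Proof.
elim: r F => [|a r IH] F //=.
by rewrite -IH; apply: Phir_ext => w; rewrite DvZ.
Qed.

Section Two.
Variables e1 e2 : X.
Hypothesis e12 : e1 != e2.
Definition Z0 (w : seq X) : algC := (w == [::])%:R.
Definition Zmul (F : seq X -> algC) (w : seq X) : algC :=
  Pf e1 (Pf e2 F) w - Q e1 e2 * Pf e2 (Pf e1 F) w.
Definition Zn n := iter n Zmul Z0.

Lemma Zmul_ext F G v : (forall w, F w = G w) -> Zmul F v = Zmul G v.
Proof.
move=> H; rewrite /Zmul (@Pf_ext e1 (Pf e2 F) (Pf e2 G)); last by move=> w; apply: Pf_ext.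
by rewrite (@Pf_ext e2 (Pf e1 F) (Pf e1 G)) //; move=> w; apply: Pf_ext.
Qed.

Lemma ZmulZ c F v : Zmul (fun w => c * F w) v = c * Zmul F v.
Proof.
rewrite /Zmul (@Pf_ext e1 (Pf e2 (fun w => c * F w)) (fun w => c * Pf e2 F w));
  last by move=> w; rewrite PfZ.
rewrite (@Pf_ext e2 (Pf e1 (fun w => c * F w)) (fun w => c * Pf e1 F w));
  last by move=> w; rewrite PfZ.
by rewrite !PfZ mulrBr mulrCA.
Qed.

Lemma Tw_Zmul a F v : Q a e1 * Q a e2 = 1 -> Tw a (Zmul F) v = Zmul (Tw a F) v.
Proof.
move=> Hq; rewrite /Tw /Zmul mulrBr mulrCA; congr (_ - _ * _).
  rewrite -/(Tw a (Pf e1 (Pf e2 F)) v) Tw_Pf.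
  rewrite (@Pf_ext e1 (Tw a (Pf e2 F)) (fun w => Q a e2 * Pf e2 (Tw a F) w));
    last by move=> w; rewrite Tw_Pf.
  by rewrite PfZ mulrA Hq mul1r.
rewrite -/(Tw a (Pf e2 (Pf e1 F)) v) Tw_Pf.
rewrite (@Pf_ext e2 (Tw a (Pf e1 F)) (fun w => Q a e1 * Pf e1 (Tw a F) w));
  last by move=> w; rewrite Tw_Pf.
by rewrite PfZ mulrA [Q a e2 * _]mulrC Hq mul1r.
Qed.

Lemma Tw_Zn a n v : Q a e1 * Q a e2 = 1 -> Tw a (Zn n) v = Zn n v.
Proof.
move=> Hq; elim: n v => [|n IH] v /=.
  by case: v => [|x v]; rewrite /Tw /Z0 /= ?mulr0 // /Qprod big_nil mul1r.
by rewrite Tw_Zmul //; apply: Zmul_ext.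
Qed.

Lemma Dv1_Zmul F v : Dv e1 (Zmul F) v = Zmul (Dv e1 F) v.
Proof.
rewrite /Zmul DvB DvZ !Dv_Pf eqxx (negbTE e12) mul0r add0r mul1r.
rewrite (@Pf_ext e1 (Dv e1 (Pf e2 F)) (Pf e2 (Dv e1 F))); last first.
  by move=> w; rewrite Dv_Pf (negbTE e12) mul0r add0r.
rewrite Tw_Pf.
rewrite (@Pf_ext e2 (Dv e1 (Pf e1 F)) (fun w => Tw e1 F w + Pf e1 (Dv e1 F) w)); last first.
  by move=> w; rewrite Dv_Pf eqxx mul1r.
rewrite PfD; ring.
Qed.

Lemma Dv2_Zmul F v : Dv e2 (Zmul F) v =
  (1 - Q e1 e2 * Q e2 e1) * Pf e1 (Tw e2 F) v + Zmul (Dv e2 F) v.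
Proof.
have e21 : (e2 == e1) = false by rewrite eq_sym (negbTE e12).
rewrite /Zmul DvB DvZ !Dv_Pf eqxx e21 mul0r add0r mul1r.
rewrite (@Pf_ext e1 (Dv e2 (Pf e2 F)) (fun w => Tw e2 F w + Pf e2 (Dv e2 F) w)); last first.
  by move=> w; rewrite Dv_Pf eqxx mul1r.
rewrite Tw_Pf.
rewrite (@Pf_ext e2 (Dv e2 (Pf e1 F)) (Pf e1 (Dv e2 F))); last first.
  by move=> w; rewrite Dv_Pf e21 mul0r add0r.
rewrite PfD; ring.
Qed.

Lemma Dv_Z0 a v : Dv a Z0 v = 0.
Proof.
rewrite Dv_closed big1 // => i _.
by rewrite /Z0; case: (take i v) => [|? ?] /=; rewrite mulr0.
Qed.

Lemma Dv1_Zn n v : Dv e1 (Zn n) v = 0.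
Proof.
elim: n v => [|n IH] v /=; first exact: Dv_Z0.
rewrite Dv1_Zmul (@Zmul_ext _ (fun w => 0 * 0)); last by move=> w; rewrite IH mulr0.
by rewrite ZmulZ mul0r.
Qed.

Variable cq : algC.
Hypothesis Hcq : cq = 1 - Q e1 e2 * Q e2 e1.
Hypothesis Hq1 : Q e1 e1 * Q e1 e2 = 1.
Hypothesis Hq2 : Q e2 e1 * Q e2 e2 = 1.

Lemma Dv12_Zn n v : Dv e1 (Dv e2 (Zn n.+1)) v = cq * n.+1%:R * Zn n v.
Proof.
elim: n v => [|n IH] v.
  rewrite (@Dv_ext e1 _ (fun w => cq * Pf e1 Z0 w + Zmul (fun _ => 0) w)); last first.
    move=> w; rewrite /= Dv2_Zmul -Hcq; congr (_ * _ + _).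
      by apply: Pf_ext => u; exact: (@Tw_Zn e2 0 u Hq2).
    by apply: Zmul_ext => u; rewrite Dv_Z0.
  rewrite DvD DvZ Dv_Pf eqxx mul1r.
  rewrite (@Dv_ext e1 (Zmul (fun=> 0)) (fun w => 0 * Zmul (fun=> 0) w)); last first.
    by move=> w; rewrite (@Zmul_ext _ (fun w => 0 * 0)) ?ZmulZ ?mul0r // => u; rewrite mulr0.
  rewrite DvZ mul0r addr0 (@Tw_Zn e1 0) // (@Pf_ext e1 _ (fun w => 0 * 0)); last first.
    by move=> w; rewrite Dv_Z0 mulr0.
  by rewrite PfZ mul0r addr0 mulr1.
rewrite (@Dv_ext e1 _ (fun w => cq * Pf e1 (Zn n.+1) w + Zmul (Dv e2 (Zn n.+1)) w)); last first.
  move=> w; rewrite [Zn n.+2]/= Dv2_Zmul -Hcq; congr (_ * _ + _).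
  by apply: Pf_ext => u; exact: (@Tw_Zn e2 n.+1 u Hq2).
rewrite DvD DvZ Dv_Pf eqxx mul1r (@Tw_Zn e1 n.+1) //.
rewrite (@Pf_ext e1 _ (fun w => 0 * 0)); last by move=> w; rewrite Dv1_Zn mulr0.
rewrite PfZ mul0r addr0 Dv1_Zmul.
rewrite (@Zmul_ext _ (fun w => (cq * n.+1%:R) * Zn n w)) // ZmulZ.
rewrite -[Zmul (Zn n) v]/(Zn n.+1 v) (mulrSr _ n.+1); ring.
Qed.

Lemma Phi_Zn n :
  Phir (flatten (nseq n [:: e2; e1])) (Zn n) = cq ^+ n * n`!%:R.
Proof.
elim: n => [|n IH] /=; first by rewrite /Z0 eqxx expr0 mulr1.
rewrite (@Phir_ext _ _ (fun w => (cq * n.+1%:R) * Zn n w)); last by move=> w; exact: Dv12_Zn.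
rewrite PhirZ IH factS natrM exprS; ring.
Qed.

End Two.

Section One.
Variable e1 : X.
Hypothesis Hq : Q e1 e1 = 1.
Definition Yn n := iter n (Pf e1) (Z0).

Lemma Tw_Yn n v : Tw e1 (Yn n) v = Yn n v.
Proof.
elim: n v => [|n IH] v /=.
  by case: v => [|x v]; rewrite /Tw /Z0 /= ?mulr0 // /Qprod big_nil mul1r.
by rewrite Tw_Pf Hq mul1r; apply: Pf_ext.
Qed.

Lemma Dv_Yn n v : Dv e1 (Yn n.+1) v = n.+1%:R * Yn n v.
Proof.
elim: n v => [|n IH] v.
  change (Dv e1 (Pf e1 (Yn 0)) v = 1%:R * Yn 0 v).
  by rewrite Dv_Pf eqxx mul1r (Tw_Yn 0) (@Pf_ext e1 _ (fun _ => 0 * 0)) ?PfZ ?mul0r ?addr0 ?mul1r // => w; rewrite Dv_Z0 ?mulr0.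
change (Dv e1 (Pf e1 (Yn n.+1)) v = n.+2%:R * Pf e1 (Yn n) v).
rewrite Dv_Pf eqxx mul1r Tw_Yn.
rewrite (@Pf_ext e1 _ (fun w => n.+1%:R * Yn n w)) // PfZ.
by rewrite (mulrSr _ n.+1) mulrDl mul1r addrC.
Qed.

Lemma Phi_Yn n : Phir (nseq n e1) (Yn n) = n`!%:R.
Proof.
elim: n => [|n IH] /=; first by rewrite /Z0 eqxx.
rewrite (@Phir_ext _ _ (fun w => n.+1%:R * Yn n w)); last by move=> w; exact: Dv_Yn.
by rewrite PhirZ IH factS natrM.
Qed.
End One.

End DerAlg.

Unset Implicit Arguments. Set Strict Implicit.

Section Bridge.
Variable X : finType.
Variable cc : X -> X -> X -> X -> algC.
Variable S : pred X.
Variable x0 : X.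
Definition Qc (a b : X) := cc b a a b.
Hypothesis diag : forall a b h t', S a -> S b ->
  cc h t' a b = ((t' == a) && (h == b))%:R * Qc a b.

Definition appt n (A : op X n) (f : n.-tuple X -> algC) (y : n.-tuple X) :=
  \sum_(w : n.-tuple X) A y w * f w.

Definition supp (F : seq X -> algC) := forall w, F w != 0 -> all S w.

Lemma appt_ext n A f f' y : (forall w, f w = f' w) -> appt n A f y = appt n A f' y.
Proof. by move=> H; apply: eq_bigr => w _; rewrite H. Qed.

Lemma appt_comp n A B f y : appt n (comp_op X n A B) f y = appt n A (appt n B f) y.
Proof.
rewrite /appt /comp_op.
under eq_bigr do rewrite big_distrl /=.
rewrite exchange_big /=; apply: eq_bigr => v _.
by rewrite big_distrr /=; apply: eq_bigr => w _; rewrite mulrA.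
Qed.

Lemma appt_id n f y : appt n (id_op X n) f y = f y.
Proof.
rewrite /appt /id_op (bigD1 y) //= eqxx mul1r big1 ?addr0 // => w /negbTE.
by rewrite eq_sym => ->; rewrite mul0r.
Qed.

Definition swapseq (i : nat) (s : seq X) : seq X :=
  mkseq (fun j => nth x0 s (if j == i then i.+1 else if j == i.+1 then i else j)) (size s).

Lemma size_swapseq i s : size (swapseq i s) = size s.
Proof. by rewrite size_mkseq. Qed.

Lemma nth_swapseq i s j : (j < size s)%N -> nth x0 (swapseq i s) j =
  nth x0 s (if j == i then i.+1 else if j == i.+1 then i else j).
Proof. by move=> H; rewrite nth_mkseq. Qed.

Lemma all_swapseq i s : (i.+1 < size s)%N -> all S (swapseq i s) -> all S s.
Proof.
move=> Hi /(all_nthP x0) H; apply/(all_nthP x0) => j Hj.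
rewrite size_swapseq in H.
have E : nth x0 s j = nth x0 (swapseq i s)
   (if j == i then i.+1 else if j == i.+1 then i else j).
  rewrite nth_swapseq; last first.
    by case: ifP => _ //; case: ifP => _ //; apply: ltnW.
  case: (eqVneq j i) => [->|ji].
    by rewrite ?eqxx ?(gtn_eqF (ltnSn i)) ?(ltn_eqF (ltnSn i)) ?eqxx.
  case: (eqVneq j i.+1) => [->|ji1].
    by rewrite ?eqxx ?(gtn_eqF (ltnSn i)) ?(ltn_eqF (ltnSn i)) ?eqxx.
  by rewrite ?(negbTE ji) ?(negbTE ji1) ?(negbTE ji) ?(negbTE ji1).
rewrite E; apply: H.
by case: ifP => _ //; case: ifP => _ //; apply: ltnW.
Qed.


Lemma cop_app n i (Hi : (i.+1 < n)%N) F (Fs : supp F) (y : n.-tuple X) :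
  appt n (cop X cc n i) (fun w => F w) y =
  Qc (nth x0 y i.+1) (nth x0 y i) * F (swapseq i y).
Proof.
have Hi0 : (i < n)%N by apply: ltnW.
have Hsz : size (swapseq i y) == n by rewrite size_swapseq size_tuple.
pose w0 : n.-tuple X := Tuple Hsz.
rewrite /appt /cop (insubT (fun j => (j < n)%N) Hi0) (insubT (fun j => (j < n)%N) Hi) /=.
rewrite (bigD1 w0) //= big1 ?addr0; last first.
  move=> w Hw.
  case: (eqVneq (F w) 0) => [->|Fw]; first by rewrite mulr0.
  have /(all_nthP x0) AS := Fs _ Fw.
  rewrite size_tuple in AS.
  rewrite diag ?(tnth_nth x0) ?AS //.
  case: forallP => [Hf|_]; last by rewrite !mul0r.
  case: andP => [[/eqP E1 /eqP E2]|_]; last by rewrite mul0r mulr0 mul0r.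
  exfalso; move/eqP: Hw; apply; apply: eq_from_tnth => j.
  rewrite !(tnth_nth x0) /= nth_swapseq ?size_tuple //.
  case: (eqVneq (val j) i) => [Ej|ji].
    by rewrite Ej -E1.
  case: (eqVneq (val j) i.+1) => [Ej|ji1].
    by rewrite Ej -E2.
  rewrite ?(negbTE ji) ?(negbTE ji1).
  have := Hf j; rewrite !(tnth_nth x0) /=.
  have -> : (j != Ordinal Hi0) && (j != Ordinal Hi) by rewrite -!val_eqE /= ji ji1.
  by move=> /= /eqP ->.
have Hf : [forall j : 'I_n, (j != Ordinal Hi0) && (j != Ordinal Hi) ==> (tnth y j == tnth w0 j)].
  apply/forallP => j; apply/implyP; rewrite -!val_eqE /= => /andP [ji ji1].
  by rewrite !(tnth_nth x0) /= nth_swapseq ?size_tuple // (negbTE ji) (negbTE ji1).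
rewrite Hf mul1r.
case: (eqVneq (F (swapseq i y)) 0) => [->|Fw]; first by rewrite !mulr0.
have /(all_nthP x0) AS := Fs _ Fw.
rewrite size_swapseq size_tuple in AS.
rewrite diag ?(tnth_nth x0) ?AS //= !nth_swapseq ?size_tuple // eqxx (gtn_eqF (ltnSn i)) eqxx !eqxx /=.
by rewrite mul1r.
Qed.


Lemma appt_foldr n s B f y :
  appt n (foldr (fun i A => comp_op X n (cop X cc n i) A) B s) f y =
  appt n (prodc X cc n s) (appt n B f) y.
Proof.
elim: s y => [|i s IH] y /=; first by rewrite appt_id.
rewrite !appt_comp; apply: appt_ext => w; exact: IH.
Qed.

Lemma prodc_cat1 n s i f y :
  appt n (prodc X cc n (s ++ [:: i])) f y =
  appt n (prodc X cc n s) (appt n (cop X cc n i) f) y.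
Proof.
rewrite /prodc foldr_cat -/(prodc X cc n s) appt_foldr /=.
by apply: appt_ext => w; rewrite appt_comp; apply: appt_ext => u; rewrite appt_id.
Qed.

Lemma swapseq_cat i l b c r : size l = i ->
  swapseq i (l ++ b :: c :: r) = l ++ c :: b :: r.
Proof.
move=> Hl; apply: (@eq_from_nth _ x0).
  by rewrite size_swapseq !size_cat.
move=> j; rewrite size_swapseq => Hj; rewrite nth_swapseq //.
rewrite !nth_cat Hl.
case: (ltngtP j i) => [ji|ij|->].
- by rewrite (ltn_eqF (ltnW ji : (j < i.+1)%N)) ji.
- case: (eqVneq j i.+1) => [->|ji1].
    by rewrite ltnn subnn subSnn.
  rewrite ltnNge (ltnW ij) /=.
  have [k ->] : exists k, (j - i = k.+2)%N by exists (j - i - 2)%N; lia.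
  by [].
- by rewrite ltnNge leqnSn /= subSnn subnn.
Qed.

Definition Gi i (F : seq X -> algC) (w : seq X) : algC :=
  if (i.+1 < size w)%N then Qc (nth x0 w i.+1) (nth x0 w i) * F (swapseq i w) else 0.

Lemma supp_Gi i F : supp F -> supp (Gi i F).
Proof.
move=> Fs w; rewrite /Gi; case: ifP => Hi; last by rewrite eqxx.
case: (eqVneq (F (swapseq i w)) 0) => [->|Fw]; first by rewrite mulr0 eqxx.
move=> _; exact: (all_swapseq _ _ Hi (Fs _ Fw)).
Qed.


Lemma prodc_app m j F (Fs : supp F) v0 a (y : m.+1.-tuple X) :
  (j <= m)%N -> size v0 = m -> val y = rcons v0 a ->
  appt m.+1 (prodc X cc m.+1 [seq (m.-1 - l)%N | l <- iota 0 j]) (fun w => F w) y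
  = Qprod Qc a (drop (m - j) v0) * F (take (m - j) v0 ++ a :: drop (m - j) v0).
Proof.
elim: j F Fs => [|j IH] F Fs Hj Hsz Hy.
  rewrite /= appt_id subn0 drop_oversize ?Hsz // take_oversize ?Hsz //.
  by rewrite Hy cats1 /Qprod big_nil mul1r.
rewrite -[j.+1]addn1 iotaD map_cat /= prodc_cat1.
set i := (m.-1 - j)%N.
have Hi : (i.+1 < m.+1)%N by rewrite /i; lia.
rewrite (appt_ext _ _ _ (fun w => Gi i F w)); last first.
  by move=> w; rewrite cop_app // /Gi size_tuple Hi.
rewrite (IH (Gi i F) (supp_Gi i F Fs)) //; last by lia.
have Hp : (m - j = i.+1)%N by rewrite /i; lia.
have Hp' : (m - (j + 1) = i)%N by rewrite /i; lia.
have Hiv : (i < size v0)%N by rewrite Hsz /i; lia.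
rewrite Hp Hp' (take_nth x0 Hiv) cat_rcons /Gi size_cat size_take Hiv /=.

have -> : (i.+1 < i + (size (drop i.+1 v0)).+2)%N by lia.
have E1 : nth x0 (take i v0 ++ [:: nth x0 v0 i, a & drop i.+1 v0]) i.+1 = a.
  by rewrite nth_cat size_take Hiv ltnNge leqnSn /= subSnn.
have E0 : nth x0 (take i v0 ++ [:: nth x0 v0 i, a & drop i.+1 v0]) i = nth x0 v0 i.
  by rewrite nth_cat size_take Hiv ltnn subnn.
rewrite E1 E0.
rewrite swapseq_cat ?size_take ?Hiv // -(drop_nth x0 Hiv).
have Hq : Qprod Qc a (drop i v0) = Qc a (nth x0 v0 i) * Qprod Qc a (drop i.+1 v0).
  by rewrite (drop_nth x0 Hiv) /Qprod big_cons.
by rewrite Hq; ring.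
Qed.


Lemma supp_Dv a F : supp F -> supp (Dv Qc a F).
Proof.
move=> Fs v; apply: contraR => Hv; rewrite Dv_closed big1 // => p _.
case: (eqVneq (F (take p v ++ a :: drop p v)) 0) => [->|Fw]; first by rewrite mulr0.
have := Fs _ Fw; rewrite all_cat /= => /and3P [H1 _ H2].
by move: Hv; rewrite -{1}(cat_take_drop p v) all_cat H1 H2.
Qed.

Lemma T_app m F (Fs : supp F) v0 a (y : m.+1.-tuple X) :
  size v0 = m -> val y = rcons v0 a ->
  appt m.+1 (fun w' w => \sum_(j < m.+1)
       prodc X cc m.+1 [seq (m.-1 - l)%N | l <- iota 0 j] w' w) (fun w => F w) y
  = Dv Qc a F v0.
Proof.
move=> Hsz Hy.
rewrite /appt; under eq_bigr do rewrite big_distrl /=.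
rewrite exchange_big /=.
rewrite (eq_bigr (fun j : 'I_m.+1 => Qprod Qc a (drop (m - j) v0) *
   F (take (m - j) v0 ++ a :: drop (m - j) v0))); last first.
  by move=> j _; rewrite -(prodc_app m j F Fs v0 a y (ltn_ord j : (j <= m)%N) Hsz Hy).
rewrite Dv_closed Hsz (reindex_inj rev_ord_inj) /=.
by apply: eq_bigr => j _; have -> : (m - (m.+1 - j.+1) = j)%N by have := ltn_ord j; lia.
Qed.


Definition rtuple m (v0 : m.-tuple X) (x : X) : m.+1.-tuple X :=
  Tuple (introT eqP (etrans (size_rcons v0 x) (congr1 succn (size_tuple v0)))).
Arguments rtuple {m}.

Lemma init_rtuple m (v0 : m.-tuple X) x : init_tuple X m (rtuple v0 x) = v0.
Proof.
apply: eq_from_tnth => j; rewrite tnth_mktuple !(tnth_nth x0) /=.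
by rewrite nth_rcons size_tuple ltn_ord.
Qed.

Lemma last_rtuple m (v0 : m.-tuple X) x : tnth (rtuple v0 x) ord_max = x.
Proof. by rewrite (tnth_nth x0) /= nth_rcons size_tuple ltnn eqxx. Qed.

Lemma rtuple_init m (v : m.+1.-tuple X) :
  rtuple (init_tuple X m v) (tnth v ord_max) = v.
Proof.
apply: eq_from_tnth => j; rewrite (tnth_nth x0) /= nth_rcons size_tuple.
case: ltngtP => [Hj|Hj|Hj].
- have Hj2 : (j < m)%N by move: Hj; rewrite ?card_ord.
  rewrite (nth_map (Ordinal Hj2)) ?size_enum_ord //; congr tnth; apply: val_inj; by rewrite /= nth_enum_ord.
- by have := ltn_ord j; rewrite card_ord in Hj; rewrite ltnS leqNgt Hj.
- rewrite card_ord in Hj; by congr tnth; apply: val_inj; rewrite /= Hj.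
Qed.

Lemma sum_rtuple m (G : m.+1.-tuple X -> algC) :
  \sum_(v : m.+1.-tuple X) G v = \sum_(v0 : m.-tuple X) \sum_(x : X) G (rtuple v0 x).
Proof.
rewrite pair_big /=.
rewrite (reindex (fun p : m.-tuple X * X => rtuple p.1 p.2)) //=.
exists (fun v => (init_tuple X m v, tnth v ord_max)) => [[v0 x] _|v _] /=.
  by rewrite init_rtuple last_rtuple.
exact: rtuple_init.
Qed.

Lemma Omega_app n F (Fs : supp F) (y : n.-tuple X) :
  appt n (Omega X cc n) (fun w => F w) y = Phir Qc (rev y) F.
Proof.
elim: n F Fs y => [|m IH] F Fs y.
  by rewrite /= appt_id (tuple0 y).
rewrite [Omega _ _ m.+1]/= appt_comp {1}/appt sum_rtuple.
set ym := tnth y ord_max.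
rewrite (eq_bigr (fun v0 => Omega X cc m (init_tuple X m y) v0 * Dv Qc ym F v0)); last first.
  move=> v0 _; rewrite (bigD1 ym) //= big1 ?addr0; last first.
    by move=> x Hx; rewrite /ext_op init_rtuple last_rtuple eq_sym (negbTE Hx) !mulr0 mul0r.
  rewrite /ext_op init_rtuple last_rtuple eqxx mulr1.
  by rewrite (T_app _ F Fs (val v0) ym (rtuple v0 ym) (size_tuple v0)).
have := IH (Dv Qc ym F) (supp_Dv ym F Fs) (init_tuple X m y); rewrite /appt => ->.
by rewrite -{2}(rtuple_init _ y) /= rev_rcons.
Qed.

End Bridge.

Section Gen.
Variable X : finType.
Variable cc : X -> X -> X -> X -> algC.
Variable S : pred X.
Variable x0 : X.
Hypothesis diag : forall a b h t', S a -> S b ->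
  cc h t' a b = ((t' == a) && (h == b))%:R * Qc X cc a b.

Lemma supp_Pf b F : S b -> supp X S F -> supp X S (Pf b F).
Proof.
move=> Sb Fs [|x w] /=; first by rewrite eqxx.
case: (eqVneq x b) => [->|_]; last by rewrite mul0r eqxx.
by rewrite mul1r /= Sb => /Fs.
Qed.

Lemma supp_B F G c : supp X S F -> supp X S G -> supp X S (fun w => F w - c * G w).
Proof.
move=> Fs Gs w; apply: contraR => Hw.
have -> : F w = 0 by apply/eqP; apply: contraR Hw; apply: Fs.
have -> : G w = 0 by apply/eqP; apply: contraR Hw; apply: Gs.
by rewrite mulr0 subr0.
Qed.

Lemma supp_Z0 : supp X S (@Z0 X).
Proof. by case=> [|x w] //=; rewrite /Z0 /= eqxx. Qed.

Lemma supp_Zn e1 e2 n : S e1 -> S e2 -> supp X S (Zn (Qc X cc) e1 e2 n).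
Proof.
move=> S1 S2; elim: n => [|n IH] /=; first exact: supp_Z0.
apply: supp_B; apply: supp_Pf => //; exact: supp_Pf.
Qed.

Lemma supp_Yn e1 n : S e1 -> supp X S (Yn e1 n).
Proof.
move=> S1; elim: n => [|n IH] /=; first exact: supp_Z0.
exact: supp_Pf.
Qed.

Lemma rank_pos n (y : n.-tuple X) F : supp X S F -> Phir (Qc X cc) (rev y) F != 0 ->
  (0 < \rank (Omega_mx X cc n))%N.
Proof.
move=> Fs; rewrite -(Omega_app X cc S x0 diag n F Fs y) lt0n mxrank_eq0; apply: contraNN => /eqP H0.
rewrite /appt /= big1 // => w _.
have : (Omega_mx X cc n) (enum_rank y) (enum_rank w) = 0 by rewrite H0 mxE.
by rewrite /Omega_mx !mxE !enum_rankK => ->; rewrite mul0r.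
Qed.

Lemma inf_of_even (r : nat -> nat) : (forall n, 0 < r n.*2)%N ->
  forall N, exists m, (N <= \sum_(n < m) r n)%N.
Proof.
move=> H N; exists N.*2; elim: N => [|N IH] //.
rewrite doubleS !big_ord_recr /=.
have := H N; move: (\sum_(i < N.*2) r i) IH (r N.*2) (r N.*2.+1) => s IH a b; lia.
Qed.


Lemma flatten_nseqS (s : seq X) n : flatten (nseq n.+1 s) = flatten (nseq n s) ++ s.
Proof.
rewrite /=; elim: n => [|n IH] /=; first by rewrite cats0.
by rewrite {1}IH catA.
Qed.

Lemma rev_fl (e1 e2 : X) n : rev (flatten (nseq n [:: e1; e2])) = flatten (nseq n [:: e2; e1]).
Proof.
elim: n => [|n IH] //.
by rewrite flatten_nseqS rev_cat IH.
Qed.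

Lemma size_fl (e1 e2 : X) n : size (flatten (nseq n [:: e1; e2])) == n.*2.
Proof. by elim: n => [|n IH] //=; rewrite doubleS (eqP IH). Qed.

Theorem nichols_two e1 e2 : S e1 -> S e2 -> e1 != e2 ->
  Qc X cc e1 e1 * Qc X cc e1 e2 = 1 -> Qc X cc e2 e1 * Qc X cc e2 e2 = 1 ->
  1 - Qc X cc e1 e2 * Qc X cc e2 e1 != 0 -> nichols_dim_infinite X cc.
Proof.
move=> S1 S2 e12 Hq1 Hq2 Hc.
apply: (inf_of_even (fun n => \rank (Omega_mx X cc n))) => n.
apply: (@rank_pos _ (Tuple (size_fl e1 e2 n)) (Zn (Qc X cc) e1 e2 n)).
  exact: supp_Zn.
rewrite /= rev_fl (Phi_Zn e12 (erefl _) Hq1 Hq2).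
by rewrite mulf_neq0 ?expf_neq0 // pnatr_eq0 -lt0n fact_gt0.
Qed.

Theorem nichols_one e1 : S e1 -> Qc X cc e1 e1 = 1 -> nichols_dim_infinite X cc.
Proof.
move=> S1 Hq.
apply: (inf_of_even (fun n => \rank (Omega_mx X cc n))) => n.
have Hs : size (nseq n.*2 e1) == n.*2 by rewrite size_nseq.
apply: (@rank_pos _ (Tuple Hs) (Yn e1 n.*2)); first exact: supp_Yn.
by rewrite /= rev_nseq (Phi_Yn Hq) pnatr_eq0 -lt0n fact_gt0.
Qed.

End Gen.

Section Sk.
Variable k : nat.
Hypothesis hk : (2 < k)%N.

Let k0 : (0 < k)%N. Proof. by apply: leq_trans hk. Qed.
Definition i0 : 'I_k := Ordinal k0.

Lemma pikX m (x : 'I_k) : val ((pik k ^+ m)%g x) = ((x + m) %% k)%N.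
Proof.
elim: m => [|m IH]; first by rewrite expg0 perm1 addn0 modn_small.
rewrite expgSr permM /pik permE /= IH.
by rewrite addnS -[in LHS]addn1 modnDml addn1.
Qed.

Lemma pikX_eq a b : ((pik k ^+ a)%g == (pik k ^+ b)%g) = (a %% k == b %% k)%N.
Proof.
apply/eqP/eqP => [H|H].
  by have := congr1 (fun s : {perm 'I_k} => val (s i0)) H; rewrite /= !pikX.
apply/permP => x; apply: val_inj; rewrite !pikX.
by rewrite -modnDmr H modnDmr.
Qed.

Lemma pik_k : (pik k ^+ k)%g = 1%g.
Proof.
by apply/permP => x; apply: val_inj; rewrite pikX perm1 modnDr modn_small.
Qed.

Lemma pikV : ((pik k)^-1)%g = (pik k ^+ k.-1)%g.
Proof.
apply/eqP; rewrite eq_invg_mul -expgS prednK //; apply/eqP; exact: pik_k.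
Qed.

Lemma pik_neq1 m : (0 < m < k)%N -> (pik k ^+ m)%g != 1%g.
Proof.
move=> /andP [m0 mk]; apply/eqP => H.
have := congr1 (fun s : {perm 'I_k} => val (s i0)) H; rewrite /= pikX perm1 /= add0n modn_small //.
by move=> E; rewrite E in m0.
Qed.

Lemma cent_pik (s : {perm 'I_k}) : commute s (pik k) -> s = (pik k ^+ s i0)%g.
Proof.
move=> Hc; apply/permP => x.
have Ex : x = (pik k ^+ x)%g i0 by apply: val_inj; rewrite pikX /= add0n modn_small.
have HcX : commute s (pik k ^+ x)%g by apply: commuteX.
rewrite {1}Ex -permM -HcX permM; apply: val_inj; rewrite !pikX.
by rewrite addnC.
Qed.

Definition negf (x : 'I_k) : 'I_k := Ordinal (ltn_pmod (k - x) k0).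

Lemma negfK : involutive negf.
Proof.
move=> x; apply: val_inj => /=.
have := ltn_ord x; move: (val x) => n Hn.
case: n Hn => [|n] Hn; first by rewrite subn0 modnn subn0 modnn.
rewrite (modn_small (_ : k - n.+1 < k)%N); last by lia.
rewrite (modn_small (_ : k - (k - n.+1) < k)%N); lia.
Qed.

Definition negp : {perm 'I_k} := perm (can_inj negfK).

Lemma negpV : (negp^-1)%g = negp.
Proof.
apply/eqP; rewrite eq_invg_mul; apply/eqP/permP => x.
by rewrite permM perm1 /negp !permE negfK.
Qed.

Lemma pik_negp : ((pik k) ^ negp)%g = ((pik k)^-1)%g.
Proof.
rewrite pikV conjgE negpV; apply/permP => x; apply: val_inj.
rewrite !permM pikX /negp !permE /=.
have := ltn_ord x; move: (val x) => n Hn.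
case: n Hn => [|n] Hn.
  rewrite subn0 modnn /= (modn_small (_ : 1 < k)%N); last by lia.
  rewrite add0n modn_small; last by lia.
  by rewrite modn_small; lia.
rewrite (modn_small (_ : k - n.+1 < k)%N); last by lia.
have -> : (n.+1 + k.-1 = n + k)%N by lia.
rewrite modnDr (modn_small (_ : n < k)%N); last by lia.
case: n Hn => [|n] Hn.
  by rewrite subn1 prednK ?modnn ?subn0 ?modnn //; lia.
rewrite (modn_small (_ : (k - n.+2).+1 < k)%N); last by lia.
rewrite modn_small; lia.
Qed.

Variable omega : algC.
Hypothesis homega : omega ^+ k = 1.

Lemma chi_pikX m : chi k omega (pik k ^+ m)%g = omega ^+ (m %% k).
Proof.
rewrite /chi; case: pickP => [m' Hm'|H].
  move: Hm'; rewrite pikX_eq (modn_small (ltn_ord m')) => /eqP ->.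
  by [].
have := H (Ordinal (ltn_pmod m k0)); rewrite pikX_eq /= modn_mod eqxx.
by [].
Qed.

Lemma chi_pik : chi k omega (pik k) = omega.
Proof. by have := chi_pikX 1; rewrite expg1 modn_small ?expr1 //; apply: leq_trans hk. Qed.

Lemma chi_pikV : chi k omega ((pik k)^-1)%g = omega ^+ k.-1.
Proof. by rewrite pikV chi_pikX modn_small // prednK // ltnSn. Qed.


Variable g : Xk k -> {perm 'I_k}.
Hypothesis hg : forall t : Xk k, rcomp k (rcomp k (g t) (pik k)) (g t)^-1 = val t.

Lemma hg' t : ((pik k) ^ (g t))%g = val t.
Proof. by rewrite -hg /rcomp conjgE. Qed.

Lemma hgV t : ((val t) ^ (g t)^-1)%g = pik k.
Proof. by rewrite -hg' conjgK. Qed.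

Lemma commuteJ' (x y z : {perm 'I_k}) : commute x y -> commute (x ^ z)%g (y ^ z)%g.
Proof. by move=> H; rewrite /commute -!conjMg H. Qed.

Lemma gam_cent (a b h : Xk k) : commute (val a) (val b) ->
  (rcomp k (rcomp k (g h)^-1 (val a)) (g b) \in 'C[pik k]%g) = (h == b).
Proof.
move=> Hab; rewrite /rcomp; apply/cent1P/eqP => [Hc|->].
  apply: val_inj; rewrite -hg' -hg'.
  set gam := (g b * (val a * (g h)^-1))%g.
  have Pg : ((pik k) ^ gam)%g = pik k by rewrite conjgE -Hc mulKg.
  rewrite -{1}Pg -conjgM /gam -!mulgA mulVg mulg1 conjgM hg' conjgE -Hab mulKg.
  by rewrite -hg'.
have -> : (g b * (val a * (g b)^-1))%g = ((val a) ^ (g b)^-1)%g by rewrite conjgE invgK.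
by rewrite -(hgV b); apply: commuteJ'.
Qed.

Lemma yd_diag rho (a b h t' : Xk k) : commute (val a) (val b) ->
  yd_coef k rho g h t' a b = ((t' == a) && (h == b))%:R * yd_coef k rho g b a a b.
Proof.
move=> Hab; rewrite /yd_coef !gam_cent // !eqxx /= mul1r.
by case: (eqVneq h b) => [->|_]; rewrite ?andbF ?mul0r.
Qed.

Lemma Q_val rho (a b : Xk k) : commute (val a) (val b) ->
  yd_coef k rho g b a a b = rho ((val a) ^ (g b)^-1)%g.
Proof. by move=> Hab; rewrite /yd_coef gam_cent // !eqxx mul1r /rcomp conjgE invgK. Qed.

Lemma pik_in : pik k \in Opi k.
Proof. by apply/imsetP; exists 1%g => //; rewrite /rcomp invg1 mulg1 mul1g. Qed.

Lemma pikV_in : ((pik k)^-1)%g \in Opi k.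
Proof. by apply/imsetP; exists negp => //; rewrite /rcomp -conjgE pik_negp. Qed.

Definition t0 : Xk k := exist (fun t => t \in Opi k) (pik k) pik_in.
Definition u0 : Xk k := exist (fun t => t \in Opi k) _ pikV_in.

Definition S0 : pred (Xk k) := fun a => (a == t0) || (a == u0).

Lemma S0_val a : S0 a -> val a = pik k \/ val a = ((pik k)^-1)%g.
Proof. by case/orP => /eqP ->; [left|right]. Qed.

Lemma S0_comm a b : S0 a -> S0 b -> commute (val a) (val b).
Proof.
move=> /S0_val [] -> /S0_val [] ->; try exact: commute_refl.
  exact/commuteV/commute_refl.
exact/commute_sym/commuteV/commute_refl.
Qed.

Lemma part1 : omega != -1 -> nichols_dim_infinite (Xk k) (yd_coef k (chi k omega) g).
Proof.
move=> Hm1.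
have diag : forall a b h t', S0 a -> S0 b -> yd_coef k (chi k omega) g h t' a b =
   ((t' == a) && (h == b))%:R * Qc (Xk k) (yd_coef k (chi k omega) g) a b.
  by move=> a b h t' Sa Sb; rewrite yd_diag //; apply: S0_comm.
have St0 : S0 t0 by rewrite /S0 eqxx.
have Su0 : S0 u0 by rewrite /S0 eqxx orbT.
have Qtt : Qc (Xk k) (yd_coef k (chi k omega) g) t0 t0 = omega.
  by rewrite /Qc Q_val ?hgV ?chi_pik //; apply: commute_refl.
have Quu : Qc (Xk k) (yd_coef k (chi k omega) g) u0 u0 = omega.
  by rewrite /Qc Q_val ?hgV ?chi_pik //; apply: commute_refl.
have Qtu : Qc (Xk k) (yd_coef k (chi k omega) g) t0 u0 = omega ^+ k.-1.
  rewrite /Qc Q_val; last exact: S0_comm.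
  have -> : val t0 = ((val u0)^-1)%g by rewrite /= invgK.
  by rewrite conjVg hgV chi_pikV.
have Qut : Qc (Xk k) (yd_coef k (chi k omega) g) u0 t0 = omega ^+ k.-1.
  rewrite /Qc Q_val; last exact: S0_comm.
  have -> : val u0 = ((val t0)^-1)%g by [].
  by rewrite conjVg hgV chi_pikV.
have Hkk : omega * omega ^+ k.-1 = 1 by rewrite -exprS prednK.
case: (eqVneq omega 1) => [H1|H1].
  exact: (nichols_one (Xk k) (yd_coef k (chi k omega) g) S0 t0 diag t0 St0 (etrans Qtt H1)).
refine (nichols_two (Xk k) (yd_coef k (chi k omega) g) S0 t0 diag t0 u0 St0 Su0 _ _ _ _).
- apply/eqP => E; have := congr1 val E; rewrite /= => E2.
  have := pik_neq1 2; rewrite hk /= => /(_ isT); apply/negP; rewrite negbK.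
  by rewrite expgS expg1 {2}E2 mulgV.
- by rewrite Qtt Qtu.
- by rewrite Qut Quu mulrC.
- rewrite Qtu Qut; apply/eqP => E.
  have E2 : omega ^+ 2 = 1.
    have : (omega * omega ^+ k.-1) * (omega * omega ^+ k.-1) = 1 by rewrite Hkk mulr1.
    rewrite mulrACA expr2 => H; rewrite -[RHS]H.
    move/eqP: E; rewrite subr_eq0 => /eqP <-; by rewrite mulr1.
  have F : (omega - 1) * (omega + 1) = omega ^+ 2 - 1 by ring.
  rewrite E2 subrr in F; move/eqP: F.
  by rewrite mulf_eq0 subr_eq0 (negbTE H1) /= addr_eq0 (negbTE Hm1).
Qed.

Lemma chi_comm_neg (hev : ~~ odd k) (Hm : omega = -1) (a b : Xk k) :
  commute (val a) (val b) -> chi k omega ((val a) ^ (g b)^-1)%g = -1.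
Proof.
move=> Hab.
have Hs : commute ((val a) ^ (g b)^-1)%g (pik k) by rewrite -(hgV b); apply: commuteJ'.
have Es := cent_pik _ Hs.
rewrite Es chi_pikX modn_small // Hm.
set n := (nat_of_ord (((val a) ^ (g b)^-1)%g i0)).
case Ho : (odd n); first by rewrite -signr_odd Ho expr1.
exfalso.
have Hk2 : k = (k./2).*2 by rewrite -{1}(odd_double_half k) (negbTE hev) add0n.
have Hn2 : n = (n./2).*2 by rewrite -{1}(odd_double_half n) Ho add0n.
have E1 : (((val a) ^ (g b)^-1) ^+ k./2)%g = 1%g.
  rewrite Es -expgM.
  have M : forall x y : nat, ~~ odd x -> ~~ odd y -> (x * y./2 = y * x./2)%N.
    move=> x y hx hy.
    have [x' ->] : exists x', x = x'.*2 by exists x./2; rewrite -{1}(odd_double_half x) (negbTE hx).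
    have [y' ->] : exists y', y = y'.*2 by exists y./2; rewrite -{1}(odd_double_half y) (negbTE hy).
    by rewrite !doubleK -!mul2n -!mulnA (mulnC x').
  rewrite -/n M ?Ho //.
  by rewrite expgM pik_k expg1n.
move: E1; rewrite -(hg' a) -conjgM -conjXg => /eqP; rewrite conjg_eq1.
apply/negP; apply: pik_neq1.
have hk' := hk; move: hk' Hk2; rewrite -addnn; move: (k./2) => h; lia.
Qed.

Lemma part2 (hev : ~~ odd k) : omega = -1 -> negative_braiding k (chi k omega) g.
Proof.
move=> Hm t u Htu /=.
have E : forall a b : Xk k, rcomp k (rcomp k (g b)^-1 (val a)) (g b) = ((val a) ^ (g b)^-1)%g.
  by move=> a b; rewrite /rcomp conjgE invgK.
have Hc : commute (val t) (val u) by rewrite /commute; move: Htu; rewrite /rcomp => ->.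
rewrite !E !chi_comm_neg //.
by split => //; rewrite mulrNN mulr1.
Qed.

End Sk.

Theorem proposition2p2 (k : nat) (hk : (2 < k)%N) (hev : ~~ odd k)
  (omega : algC) (homega : omega ^+ k = 1)
  (g : Xk k -> {perm 'I_k})
  (hg : forall t : Xk k, rcomp k (rcomp k (g t) (pik k)) (g t)^-1 = val t) :
  (omega != -1 -> nichols_dim_infinite (Xk k) (yd_coef k (chi k omega) g)) /\
  (omega = -1 -> negative_braiding k (chi k omega) g).
Proof.
split.
  exact: (part1 k hk omega homega g hg).
exact: (part2 k hk omega g hg hev).
Qed.
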